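(* Let $\mathcal{H}$ be a real Hilbert space. For each $i=1,2,\ldots,N$, let $f_i:\mathcal{H}\to\mathcal{H}$ be $\alpha_i$-inverse strongly monotone ($\alpha_i>0$) and let $C_i\subset\mathcal{H}$ be nonempty, closed and convex, with $\bigcap_{i=1}^N C_i\neq\emptyset$. Let $\Psi:=\bigcap_{i=1}^N SOL(C_i,f_i)$ and assume $\Psi\neq\emptyset$. Set $\alpha:=\min_i\alpha_i$ and take $\lambda\in(0,2\alpha)$. Let $T_i:=P_{C_i}(I-\lambda f_i)$, i.e. $T_i(x)=P_{C_i}(x-\lambda f_i(x))$. Given an arbitrary $x^0\in\mathcal{H}$, define $x^{k+1}=(T_1\circ T_2\circ\cdots\circ T_N)(x^k)$ for $k\ge 0$. Then $\{x^k\}_{k=0}^\infty$ converges weakly to a point $x^\ast\in\Psi$, and moreover $x^\ast=\lim_{k\to\infty}P_\Psi(x^k)$ (strong limit).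
   Context: An operator $h:\mathcal{H}\to\mathcal{H}$ is $\beta$-inverse strongly monotone ($\beta>0$) if $\langle h(x)-h(y),x-y\rangle\geq\beta\|h(x)-h(y)\|^2$ for all $x,y\in\mathcal{H}$. For a nonempty closed convex set $D\subset\mathcal{H}$, $P_D$ denotes the metric (nearest point) projection onto $D$. For such $D$ and an operator $h$, $SOL(D,h)$ denotes the set of $x^\ast\in D$ with $\langle h(x^\ast),x-x^\ast\rangle\geq 0$ for all $x\in D$. The set $\Psi$ is closed and convex. *)

(* Defs.v *)
From HB Require Import structures.
From mathcomp Require Import all_boot all_order all_algebra.
From mathcomp Require Import all_classical all_reals all_analysis.
Set Implicit Arguments. Unset Strict Implicit. Unset Printing Implicit Defensive.
Import Order.TTheory GRing.Theory Num.Theory.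
Local Open Scope classical_set_scope.
Local Open Scope ring_scope.

(* A real Hilbert space is modelled as a complete normed space V over a
   realType R together with a real inner product ip inducing the norm. *)
Definition inner_product (R : realType) (V : completeNormedModType R)
  (ip : V -> V -> R) : Prop :=
  [/\ forall x y, ip x y = ip y x,
      forall x y z, ip (x + y) z = ip x z + ip y z,
      forall (a : R) x y, ip (a *: x) y = a * ip x y &
      forall x, `|x| ^+ 2 = ip x x].

Definition inverse_strongly_monotone (R : realType) (V : completeNormedModType R)
  (ip : V -> V -> R) (beta : R) (h : V -> V) : Prop :=
  forall x y, beta * `|h x - h y| ^+ 2 <= ip (h x - h y) (x - y).

Definition convex_set_ (R : realType) (V : completeNormedModType R) (D : set V) :=
  forall x y (t : R), D x -> D y -> 0 <= t -> t <= 1 -> D (t *: x + (1 - t) *: y).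

(* metric (nearest point) projection onto D (a nearest point chosen by
   choice; it exists and is unique when D is nonempty closed convex in a
   Hilbert space) *)
Definition metric_proj (R : realType) (V : completeNormedModType R)
  (D : set V) (x : V) : V :=
  xget 0 [set p | D p /\ forall q, D q -> `|x - p| <= `|x - q|].

Definition SOL (R : realType) (V : completeNormedModType R)
  (ip : V -> V -> R) (D : set V) (h : V -> V) : set V :=
  [set xs | D xs /\ forall x, D x -> 0 <= ip (h xs) (x - xs)].

(* Main.v *)
Require Import Defs.
From HB Require Import structures.
From mathcomp Require Import all_boot all_order all_algebra.
From mathcomp Require Import all_classical all_reals all_analysis.
From mathcomp Require Import ring lra.
Import Order.TTheory GRing.Theory Num.Theory.
Set Implicit Arguments. Unset Strict Implicit. Unset Printing Implicit Defensive.
Local Open Scope classical_set_scope.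
Local Open Scope ring_scope.

Lemma cvg_seqP {R : realType} {V : normedModType R} (u : nat -> V) (l : V) :
  u @ \oo --> l <-> forall e, 0 < e -> exists N, forall n, (N <= n)%N -> `|l - u n| < e.
Proof.
rewrite cvgrPdist_lt; split=> h e /h.
  by move=> [N _ HN]; exists N => n /HN.
by move=> [N HN]; exists N => // n /HN.
Qed.

Lemma cauchy_seq {R : realType} {V : completeNormedModType R} (u : nat -> V) :
  (forall e, 0 < e -> exists N, forall m n, (N <= m)%N -> (N <= n)%N -> `|u m - u n| < e) ->
  exists l : V, u @ \oo --> l.
Proof.
move=> h; have : cvgn u.
  apply: cauchy_cvg; apply: cauchy_exP => e /h [N HN].
  exists (u N); exists N => // n /= Nn; rewrite -ball_normE /ball_ /=.
  exact: HN.
by move=> c; exists (limn u).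
Qed.

Lemma inv_small {R : realType} (e : R) : 0 < e ->
  exists N, forall n, (N <= n)%N -> (n.+1%:R)^-1 < e.
Proof.
move=> e0; exists (Num.Def.trunc (e^-1)) => n hn.
have h : e^-1 < n.+1%:R.
  apply: (lt_le_trans (truncnS_gt _)); by rewrite ler_nat ltnS.
by rewrite -[e]invrK ltf_pV2 ?posrE ?invr_gt0 ?ltr0Sn.
Qed.

Lemma ler_normN {R : realDomainType} (x : R) : - `|x| <= x.
Proof. by rewrite lerNl -normrN ler_norm. Qed.

Section ULim.
Context {R : realType} (U : set_system nat) {UU : UltraFilter U}.

Definition ulim (b : nat -> R) l := forall e, 0 < e -> U [set k | `|b k - l| < e].

Lemma ulim_ex b M : (forall k, `|b k| <= M) -> exists l, ulim b l.
Proof.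
move=> hb.
have hF : (b @ U) `[- M, M]%classic.
  apply: (@filterS _ U _ setT); last exact: filterT.
  by move=> k _ /=; rewrite in_itv /= -ler_norml; exact: hb.
have [c [_ cl]] := segment_compact _ hF.
exists c => e e0.
have [//|hC] := in_ultra_setVsetC [set k | `|b k - c| < e] UU.
have := cl [set r | ~ `|r - c| < e] (ball (c : R^o) e) hC (@nbhsx_ballx R R^o c e e0).
move=> [r [/= h1 h2]]; exfalso; apply: h1.
by rewrite distrC; move: h2; rewrite -ball_normE /ball_ /=.
Qed.

Lemma ulim_uniq b l1 l2 : ulim b l1 -> ulim b l2 -> l1 = l2.
Proof.
move=> h1 h2; apply/eqP; rewrite -subr_eq0 -normr_eq0; apply/eqP.
apply/le_anti; rewrite normr_ge0 andbT; apply/ler_addgt0Pr => e e0.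
rewrite add0r.
have e2 : 0 < e / 2 by lra.
have [k [/= k1 k2]] := filter_ex (filterI (h1 _ e2) (h2 _ e2)).
have := ler_normD (l1 - b k) (b k - l2).
rewrite addrA subrK distrC => h.
move: k1 k2; rewrite (distrC (b k)) => k1 k2; lra.
Qed.

Lemma ulimD b1 b2 l1 l2 : ulim b1 l1 -> ulim b2 l2 ->
  ulim (fun k => b1 k + b2 k) (l1 + l2).
Proof.
move=> h1 h2 e e0; have e2 : 0 < e / 2 by lra.
apply: filterS (filterI (h1 _ e2) (h2 _ e2)) => k [/= k1 k2].
have -> : b1 k + b2 k - (l1 + l2) = (b1 k - l1) + (b2 k - l2).
  by rewrite opprD addrACA.
apply: le_lt_trans (ler_normD _ _) _; lra.
Qed.

Lemma ulimZ r b l : ulim b l -> ulim (fun k => r * b k) (r * l).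
Proof.
move=> h e e0.
have e1 : 0 < e / (`|r| + 1) by apply: divr_gt0 => //; have := normr_ge0 r; lra.
apply: filterS (h _ e1) => k /= hk.
rewrite -mulrBr normrM.
have r0 := normr_ge0 r.
move: hk; rewrite ltr_pdivlMr; last lra.
move=> hk; have := normr_ge0 (b k - l); nra.
Qed.

Lemma ulim_ext b1 b2 l : (forall k, b1 k = b2 k) -> ulim b1 l -> ulim b2 l.
Proof. by move=> e h eps /h; apply: filterS => k /=; rewrite e. Qed.

Lemma ulim_bound b l M : (forall k, `|b k| <= M) -> ulim b l -> `|l| <= M.
Proof.
move=> hb h; apply/ler_addgt0Pr => e e0.
have [k /= hk] := filter_ex (h _ e0).
have := ler_normD (b k) (l - b k); rewrite addrC subrK => h2.
have := hb k; rewrite distrC in hk; lra.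
Qed.

End ULim.

Section Hilbert.
Context {R : realType} {V : completeNormedModType R} (ip : V -> V -> R).
Hypothesis hip : inner_product ip.

Lemma ipC x y : ip x y = ip y x. Proof. by case: hip. Qed.
Lemma ipDl x y z : ip (x + y) z = ip x z + ip y z. Proof. by case: hip. Qed.
Lemma ipZl a x y : ip (a *: x) y = a * ip x y. Proof. by case: hip. Qed.
Lemma nE x : `|x| ^+ 2 = ip x x. Proof. by case: hip. Qed.
Lemma ipDr x y z : ip z (x + y) = ip z x + ip z y.
Proof. by rewrite ipC ipDl ipC (ipC y). Qed.
Lemma ipZr a x y : ip y (a *: x) = a * ip y x.
Proof. by rewrite ipC ipZl ipC. Qed.
Lemma ipNl x y : ip (- x) y = - ip x y.
Proof. by rewrite -scaleN1r ipZl mulN1r. Qed.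
Lemma ipNr x y : ip y (- x) = - ip y x.
Proof. by rewrite ipC ipNl ipC. Qed.
Lemma ipBl x y z : ip (x - y) z = ip x z - ip y z.
Proof. by rewrite ipDl ipNl. Qed.
Lemma ipBr x y z : ip z (x - y) = ip z x - ip z y.
Proof. by rewrite ipDr ipNr. Qed.
Lemma ip0l x : ip 0 x = 0.
Proof. by rewrite -(scale0r 0) ipZl mul0r. Qed.
Lemma ip0r x : ip x 0 = 0.
Proof. by rewrite ipC ip0l. Qed.
Lemma ip_ge0 x : 0 <= ip x x.
Proof. by rewrite -nE sqr_ge0. Qed.
Lemma ip_eq0 x : ip x x = 0 -> x = 0.
Proof. by rewrite -nE => /eqP; rewrite sqrf_eq0 normr_eq0 => /eqP. Qed.

Definition ipE := (ipDl, ipDr, ipBl, ipBr, ipNl, ipNr, ipZl, ipZr, ip0l, ip0r).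

Lemma CS x y : ip x y ^+ 2 <= ip x x * ip y y.
Proof.
have [y0|yn0] := eqVneq (ip y y) 0.
  by rewrite (ip_eq0 y0) ip0r ip0l expr0n /= mulr0.
have hy : 0 < ip y y by rewrite lt_neqAle eq_sym yn0 ip_ge0.
have := ip_ge0 (x - (ip x y / ip y y) *: y).
rewrite !ipE (ipC y x).
set a := ip x x; set b := ip x y; set c := ip y y => h.
have cn0 : c != 0 by [].
have e : a - b / c * b + (- (b / c * b) - - (b / c * (b / c * c))) = (a*c - b^+2) / c.
  by field.
move: h; rewrite e => h.
by have := mulr_ge0 h (ltW hy); rewrite divfK // subr_ge0.
Qed.

Lemma CSabs x y : `|ip x y| <= `|x| * `|y|.
Proof.
rewrite -(@ler_pXn2r _ 2) ?nnegrE ?mulr_ge0 //.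
by rewrite real_normK ?num_real // exprMn !nE CS.
Qed.

Lemma nle_ip u v : (`|u| <= `|v|) = (ip u u <= ip v v).
Proof. by rewrite -!nE ler_pXn2r ?nnegrE. Qed.
Lemma nlt_ip u v : (`|u| < `|v|) = (ip u u < ip v v).
Proof. by rewrite -!nE ltr_pXn2r ?nnegrE. Qed.

Lemma nlt_sq u e : 0 <= e -> (`|u| < e) = (ip u u < e ^+ 2).
Proof. by move=> e0; rewrite -nE ltr_pXn2r ?nnegrE. Qed.
Lemma nle_sq u e : 0 <= e -> (`|u| <= e) = (ip u u <= e ^+ 2).
Proof. by move=> e0; rewrite -nE ler_pXn2r ?nnegrE. Qed.

Definition nearest (D : set V) x p := D p /\ forall q, D q -> `|x - p| <= `|x - q|.

Lemma near_char D x p : convex_set_ D -> nearest D x p ->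
  forall q, D q -> ip (x - p) (q - p) <= 0.
Proof.
move=> cD [Dp hp] q Dq.
have key : forall t, 0 < t -> t <= 1 -> 2 * ip (x - p) (q - p) <= t * ip (q - p) (q - p).
  move=> t t0 t1.
  have Dm := cD q p t Dq Dp (ltW t0) t1.
  have := hp _ Dm; rewrite nle_ip !ipE (ipC q x) (ipC p x) (ipC p q).
  move=> h; nra.
set g := ip (x - p) (q - p); set s := ip (q - p) (q - p).
have s0 : 0 <= s by apply: ip_ge0.
rewrite leNgt; apply/negP => g0.
have gs : 0 < g + s by lra.
have := key (g / (g + s)); rewrite divr_gt0 // ler_pdivrMr // mul1r => /(_ isT).
have -> : g / (g + s) * s = g * s / (g + s) by rewrite mulrAC.
rewrite ler_pdivlMr // => h; have := h ltac:(lra); rewrite -/g => h2; nra.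
Qed.

Lemma char_near D x p : D p -> (forall q, D q -> ip (x - p) (q - p) <= 0) ->
  nearest D x p.
Proof.
move=> Dp h; split=> // q Dq; rewrite nle_ip.
have := h q Dq; have := ip_ge0 (q - p).
rewrite !ipE (ipC q x) (ipC p x) (ipC p q); lra.
Qed.

Lemma near_uniq D x p1 p2 : convex_set_ D -> nearest D x p1 -> nearest D x p2 -> p1 = p2.
Proof.
move=> cD h1 h2.
have := near_char cD h1 h2.1; have := near_char cD h2 h1.1.
move=> a b; apply/eqP; rewrite -subr_eq0; apply/eqP; apply: ip_eq0.
apply/eqP; rewrite eq_le ip_ge0 andbT.
move: a b; rewrite !ipE; rewrite ?(ipC p1 x) ?(ipC p2 x) ?(ipC p2 p1); lra.
Qed.

Definition seqclosed (D : set V) := forall (u : nat -> V) (l : V),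
  (forall n, D (u n)) -> u @ \oo --> l -> D l.

Lemma near_exists D x : D !=set0 -> convex_set_ D -> seqclosed D ->
  exists p, nearest D x p.
Proof.
move=> [q0 Dq0] cD sD.
set S := [set r | exists2 q, D q & r = `|x - q|].
have hS : has_inf S.
  split; first by exists `|x - q0|; exists q0.
  by exists 0 => r [q _ ->].
set d := inf S.
have d0 : 0 <= d.
  apply: lb_le_inf; first by exists `|x - q0|; exists q0.
  by move=> r [q _ ->].
have dle : forall q, D q -> d <= `|x - q|.
  by move=> q Dq; apply: ge_inf; [exact: hS.2 | exists q].
have : forall n : nat, exists q, D q /\ `|x - q| < d + (n.+1%:R)^-1.
  move=> n; have [|r [q Dq ->] hr] := @inf_adherent _ S ((n.+1%:R)^-1) (_ : _) hS.
    by rewrite invr_gt0 ltr0Sn.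
  by exists q.
move=> /choice [q hq].
have hpar : forall n m, ip (q n - q m) (q n - q m) <=
    2 * (`|x - q n| ^+ 2) + 2 * (`|x - q m| ^+ 2) - 4 * d ^+ 2.
  move=> n m.
  have Dm := cD (q n) (q m) (2^-1) (hq n).1 (hq m).1 ltac:(lra) ltac:(lra).
  have := dle _ Dm; rewrite -(ler_pXn2r (_ : (0 < 2)%N)) ?nnegrE // nE !nE => h.
  move: h; rewrite !ipE (ipC (q n) x) (ipC (q m) x) (ipC (q m) (q n)); lra.
have hsq : forall n, `|x - q n| ^+ 2 <= d ^+ 2 + 3 * (d + 1) * (n.+1%:R)^-1.
  move=> n; have [_ h] := hq n.
  have e0 : 0 < (n.+1%:R : R)^-1 by rewrite invr_gt0 ltr0Sn.
  have e1 : (n.+1%:R : R)^-1 <= 1 by rewrite invf_le1 ?ltr0Sn // ler1n.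
  move: h e0 e1; set e := (n.+1%:R : R)^-1; set a := `|x - q n| => h e0 e1.
  have : a ^+ 2 <= (d + e) ^+ 2.
    rewrite ler_pXn2r ?nnegrE ?normr_ge0 //; lra.
  nra.
have : exists l : V, q @ \oo --> l.
  apply: cauchy_seq => e e0.
  have [|N HN] := inv_small (_ : 0 < e ^+ 2 / (12 * (d + 1) + 1)).
    by rewrite divr_gt0 ?exprn_gt0 //; lra.
  exists N => m n hm hn; rewrite nlt_sq ?ltW //.
  have := hpar m n; have := hsq m; have := hsq n.
  have := HN _ hm; have := HN _ hn.
  rewrite ltr_pdivlMr; last lra.
  rewrite ltr_pdivlMr; last lra.
  have : 0 < (m.+1%:R : R)^-1 by rewrite invr_gt0 ltr0Sn.
  have : 0 < (n.+1%:R : R)^-1 by rewrite invr_gt0 ltr0Sn.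
  rewrite -nE; set en := (n.+1%:R)^-1; set em := (m.+1%:R)^-1; set A := `|q m - q n| ^+ 2; set B := `|x - q m| ^+ 2; set C := `|x - q n| ^+ 2 => *; nra.
move=> [l ql]; have Dl : D l by apply: (sD q) => // n; exact: (hq n).1.
exists l; split=> // q' Dq'.
rewrite leNgt; apply/negP => hlt.
have dq := dle _ Dq'.
set g := `|x - l| - d.
have g0 : 0 < g by rewrite /g; lra.
have [|N1 HN1] := inv_small (_ : 0 < g / 2); first by lra.
have /cvg_seqP/(_ (g / 2)) := ql; move=> /(_ ltac:(lra)) [N2 HN2].
have h1 := HN1 (maxn N1 N2) (leq_maxl _ _).
have h2 := HN2 (maxn N1 N2) (leq_maxr _ _).
have h3 := (hq (maxn N1 N2)).2.
have : `|x - l| <= `|x - q (maxn N1 N2)| + `|l - q (maxn N1 N2)|.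
  rewrite (distrC l); apply: le_trans (ler_normD _ _).
  by rewrite addrA subrK.
rewrite /g in h1 h2 g0; move: h1 h2 h3 g0; set ee := (_.+1%:R)^-1; set A := `|x - q _|; set B := `|l - q _|; set L := `|x - l|; move=> *; lra.
Qed.
Lemma closed_seq (D : set V) : closed D -> seqclosed D.
Proof.
move=> cD u l Du ul; apply: (closed_cvg _ cD _ _ ul).
by apply: nearW.
Qed.

Lemma proj_near D x : D !=set0 -> convex_set_ D -> seqclosed D ->
  nearest D x (metric_proj D x).
Proof.
move=> D0 cD sD; have [p hp] := near_exists x D0 cD sD.
exact: (xgetI 0 (P := [set p | D p /\ forall q, D q -> `|x - p| <= `|x - q|]) hp).
Qed.

Lemma vec_eq u v : ip (u - v) (u - v) = 0 -> u = v.
Proof. by move=> /ip_eq0 /eqP; rewrite subr_eq0 => /eqP. Qed.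

Lemma ip_par u v : ip (u + v) (u + v) <= 2 * ip u u + 2 * ip v v.
Proof.
have := ip_ge0 (u - v); rewrite !ipE (ipC v u); lra.
Qed.

Lemma firm D u v : convex_set_ D -> nearest D u (metric_proj D u) ->
  nearest D v (metric_proj D v) ->
  ip (metric_proj D u - metric_proj D v) (metric_proj D u - metric_proj D v)
  + ip ((u - metric_proj D u) - (v - metric_proj D v))
       ((u - metric_proj D u) - (v - metric_proj D v))
  <= ip (u - v) (u - v).
Proof.
move=> cD hu hv.
have h1 := near_char cD hu hv.1; have h2 := near_char cD hv hu.1.
move: h1 h2; set pu := metric_proj D u; set pv := metric_proj D v.
rewrite !ipE (ipC pu u) (ipC pv u) (ipC pu v) (ipC pv v) (ipC v u) (ipC pv pu).
lra.
Qed.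

Section Op.
Variables (C : set V) (f : V -> V) (lam alpha : R).
Hypotheses (C0 : C !=set0) (cC : convex_set_ C) (sC : seqclosed C)
  (a0 : 0 < alpha) (l0 : 0 < lam) (l2 : lam < 2 * alpha)
  (ism : inverse_strongly_monotone ip alpha f).
Let T x := metric_proj C (x - lam *: f x).
Ltac hyps := have L0 : 0 < lam := l0; have A0 : 0 < alpha := a0;
  have L2 : lam < 2 * alpha := l2.

Lemma T_near x : nearest C (x - lam *: f x) (T x).
Proof. exact: proj_near. Qed.
Lemma T_in x : C (T x).
Proof. exact: (T_near x).1. Qed.

Lemma T_main x y :
  ip (T x - T y) (T x - T y)
  + ip ((x - lam *: f x - T x) - (y - lam *: f y - T y))
       ((x - lam *: f x - T x) - (y - lam *: f y - T y))
  + lam * (2 * alpha - lam) * ip (f x - f y) (f x - f y)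
  <= ip (x - y) (x - y).
Proof.
have h := firm cC (T_near x) (T_near y).
have hi := ism x y; rewrite nE in hi.
have hl := ler_wpM2l (ltW l0) hi.
move: h hl; rewrite -/(T x) -/(T y).
set a := (x - lam *: f x - T x) - (y - lam *: f y - T y).
set A := ip a a; set B := ip (T x - T y) (T x - T y).
rewrite !ipE (ipC (f y) (f x)) (ipC (f x) x) (ipC (f y) x) (ipC (f x) y)
  (ipC (f y) y) (ipC y x).
move=> h hl.
nra.
Qed.

Lemma T_nonexp x y : `|T x - T y| <= `|x - y|.
Proof.
hyps.
rewrite nle_ip; have := T_main x y.
have := ip_ge0 (f x - f y).
have := ip_ge0 ((x - lam *: f x - T x) - (y - lam *: f y - T y)).
have h2 : 0 <= 2 * alpha - lam by rewrite subr_ge0 ltW.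
have := mulr_ge0 (ltW l0) h2.
nra.
Qed.

Lemma T_def : exists K, 0 < K /\ forall x y,
  ip ((x - T x) - (y - T y)) ((x - T x) - (y - T y))
  <= K * (ip (x - y) (x - y) - ip (T x - T y) (T x - T y)).
Proof.
hyps.
exists (2 + 2 * lam / (2 * alpha - lam)); split.
  have d0 : 0 < 2 * alpha - lam by lra.
  have : 0 < 2 * lam / (2 * alpha - lam) by rewrite divr_gt0 // mulr_gt0.
  lra.
move=> x y; have hm := T_main x y.
set a := (x - lam *: f x - T x) - (y - lam *: f y - T y).
set b := lam *: (f x - f y).
have -> : (x - T x) - (y - T y) = a + b.
  apply: vec_eq; rewrite /a /b !ipE.
  rewrite !(ipC (f y) (f x), ipC (f x) x, ipC (f y) x, ipC (f x) y, ipC (f y) y,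
    ipC y x, ipC (T x) x, ipC (T y) x, ipC (T x) y, ipC (T y) y, ipC (T y) (T x),
    ipC (T x) (f x), ipC (T y) (f x), ipC (T x) (f y), ipC (T y) (f y)).
  ring.
have hp := ip_par a b.
have hb : ip b b = lam ^+ 2 * ip (f x - f y) (f x - f y) by rewrite /b !ipZl !ipZr; ring.
move: hm hp; rewrite hb.
set A := ip a a; set F := ip (f x - f y) (f x - f y).
set X := ip (x - y) (x - y); set Y := ip (T x - T y) (T x - T y).
move=> hm hp.
have F0 : 0 <= F by apply: ip_ge0.
have A00 : 0 <= A by apply: ip_ge0.
have d0 : 0 < 2 * alpha - lam by lra.
have -> : 2 + 2 * lam / (2 * alpha - lam) = (2 * (2 * alpha - lam) + 2 * lam) / (2 * alpha - lam).
  by field; lra.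
rewrite mulrAC ler_pdivlMr //.
have h1 := ler_wpM2r (ltW d0) hp.
have h2 : 0 <= 2 * (2 * alpha - lam) + 2 * lam by lra.
have h3 := ler_wpM2l h2 hm.
have : 0 <= lam * A by apply: mulr_ge0; lra.
have : 0 <= lam * (2 * alpha - lam) ^+ 2 * F by apply: mulr_ge0 => //; apply: mulr_ge0; [lra|apply: sqr_ge0].
nra.
Qed.

Lemma T_fix p : SOL ip C f p <-> T p = p.
Proof.
hyps.
split.
  move=> [Cp hp]; apply: (near_uniq cC (T_near p)); apply: char_near => // q Cq.
  have -> : p - lam *: f p - p = - (lam *: f p) by rewrite addrC addKr.
  rewrite ipNl ipZl oppr_le0; exact: mulr_ge0 (ltW L0) (hp q Cq).
move=> e; have Cp : C p by rewrite -e; apply: T_in.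
split=> // q Cq.
have := near_char cC (T_near p) (Cq); rewrite e.
have -> : p - lam *: f p - p = - (lam *: f p) by rewrite addrC addKr.
rewrite ipNl ipZl => h.
have : 0 <= lam * ip (f p) (q - p) by lra.
by rewrite pmulr_rge0.
Qed.

End Op.
Lemma riesz (L : V -> R) B : (forall y1 y2, L (y1 + y2) = L y1 + L y2) ->
  (forall r y, L (r *: y) = r * L y) -> (forall y, `|L y| <= B * `|y|) ->
  exists c, forall y, L y = ip c y.
Proof.
move=> LD LZ LB.
have L0 : L 0 = 0 by rewrite -(scale0r 0) LZ mul0r.
have LN : forall y, L (- y) = - L y by move=> y; rewrite -scaleN1r LZ mulN1r.
have LBB : forall y1 y2, L (y1 - y2) = L y1 - L y2 by move=> *; rewrite LD LN.
have [[w Lw]|] := pselect (exists w, L w <> 0); last first.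
  move=> h; exists 0 => y; rewrite ip0l.
  by apply: contrapT => hy; apply: h; exists y.
set K := [set v | L v = 0].
have K0 : K !=set0 by exists 0.
have cK : convex_set_ K.
  by move=> a b t; rewrite /K /= => Ka Kb _ _; rewrite LD !LZ Ka Kb !mulr0 addr0.
have sK : seqclosed K.
  move=> u l Ku /cvg_seqP ul; rewrite /K /=.
  apply/eqP; rewrite -normr_eq0; apply/eqP/le_anti; rewrite normr_ge0 andbT.
  apply/ler_addgt0Pr => e e0; rewrite add0r.
  have B1 : 0 < `|B| + 1 by have := normr_ge0 B; lra.
  have [N HN] := ul (e / (`|B| + 1)) (divr_gt0 e0 B1).
  have h1 := HN N (leqnn N).
  have := LB (l - u N); rewrite LBB Ku subr0 => h2.
  have h3 : B * `|l - u N| <= `|B| * `|l - u N| by rewrite ler_wpM2r // ler_norm.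
  move: h1; rewrite ltr_pdivlMr // => h1.
  have := normr_ge0 B; have := normr_ge0 (l - u N); nra.
have hp := proj_near w K0 cK sK.
set P := metric_proj K w in hp.
set u := w - P.
have KP : K P := hp.1.
have Lu : L u = L w by rewrite LBB KP subr0.
have orth : forall k, K k -> ip u k = 0.
  move=> k Kk; apply/le_anti/andP; split.
    have := near_char cK hp (_ : K (k + P)); rewrite addrK; apply.
    by rewrite /K /= LD Kk KP addr0.
  have := near_char cK hp (_ : K (- k + P)); rewrite addrK ipNr oppr_le0; apply.
  by rewrite /K /= LD LN Kk KP oppr0 addr0.
have uu : ip u u != 0.
  apply/negP => /eqP /ip_eq0 u0; apply: Lw; by rewrite -Lu u0.
exists ((L u / ip u u) *: u) => y.
have Ky : K (y - (L y / L u) *: u).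
  rewrite /K /= LBB LZ Lu divfK //; first by rewrite subrr.
  by apply/eqP.
have := orth _ Ky; rewrite ipBr ipZr ipZl => /eqP; rewrite subr_eq0 => /eqP ->.
rewrite Lu; field; apply/andP; split => //; exact/eqP.
Qed.
Section Comp.
Variables (N : nat) (f : 'I_N -> V -> V) (alpha : 'I_N -> R) (C : 'I_N -> set V) (lam : R).
Hypotheses (a0 : forall i, 0 < alpha i)
  (ism : forall i, inverse_strongly_monotone ip (alpha i) (f i))
  (hC : forall i, C i !=set0 /\ closed (C i) /\ convex_set_ (C i))
  (l0 : 0 < lam) (l2 : forall i, lam < 2 * alpha i).

Let Ti i x := metric_proj (C i) (x - lam *: f i x).
Let F (s : seq 'I_N) x := foldr (fun i acc => Ti i acc) x s.
Let Psi := [set x | forall i, SOL ip (C i) (f i) x].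

Let C0 i : C i !=set0 := (hC i).1.
Let cC i : convex_set_ (C i) := (hC i).2.2.
Let sC i : seqclosed (C i) := closed_seq (hC i).2.1.

Lemma Ti_nonexp i x y : `|Ti i x - Ti i y| <= `|x - y|.
Proof. have := (T_nonexp (@C0 i) (@cC i) (@sC i) (a0 i) l0 (l2 i) (ism i) x y). exact. Qed.

Lemma Ti_fix i p : SOL ip (C i) (f i) p <-> Ti i p = p.
Proof. exact: (T_fix (f i) (@C0 i) (@cC i) (@sC i) (a0 i) l0 (l2 i)). Qed.

Lemma Ti_def i : exists K, 0 < K /\ forall x y,
  ip ((x - Ti i x) - (y - Ti i y)) ((x - Ti i x) - (y - Ti i y))
  <= K * (ip (x - y) (x - y) - ip (Ti i x - Ti i y) (Ti i x - Ti i y)).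
Proof. exact: (T_def (@C0 i) (@cC i) (@sC i) (a0 i) l0 (l2 i) (ism i)). Qed.

Lemma F_nonexp s x y : `|F s x - F s y| <= `|x - y|.
Proof.
elim: s => [|j s IH] //=.
exact: le_trans (Ti_nonexp _ _ _) IH.
Qed.

Lemma F_fix s p : Psi p -> F s p = p.
Proof.
move=> hp; elim: s => [|j s IH] //=.
by rewrite IH; apply/Ti_fix; apply: hp.
Qed.

Lemma Fip_nonexp s x y : ip (F s x - F s y) (F s x - F s y) <= ip (x - y) (x - y).
Proof. by rewrite -nle_ip; apply: F_nonexp. Qed.

Lemma F_def s : exists A, 0 <= A /\ forall x p, Psi p ->
  ip (x - F s x) (x - F s x)
    <= A * (ip (x - p) (x - p) - ip (F s x - p) (F s x - p)) /\
  forall i, i \in s -> ip (x - Ti i x) (x - Ti i x)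
    <= A * (ip (x - p) (x - p) - ip (F s x - p) (F s x - p)).
Proof.
elim: s => [|j s [A [A0 IH]]].
  exists 0; split=> // x p hp /=; rewrite subrr ip0l mul0r; split=> //.
have [K [K0 hK]] := Ti_def j.
exists (6 * A + 4 * K); split; first lra.
move=> x p hp; have [IH1 IH2] := IH x p hp.
set y := F s x.
have Fe : F (j :: s) x = Ti j y by [].
rewrite Fe.
have Tp : Ti j p = p by apply/Ti_fix; apply: hp.
have hy := hK y p; rewrite Tp subrr subr0 in hy.
set X := ip (x - p) (x - p); set Y := ip (y - p) (y - p).
set Z := ip (Ti j y - p) (Ti j y - p).
have XY : Y <= X by have := Fip_nonexp s x p; rewrite (F_fix s hp).
have YZ : Z <= Y by have := Ti_nonexp j y p; rewrite Tp nle_ip.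
move: IH1 IH2 hy; rewrite -/y -/X -/Y -/Z => IH1 IH2 hy.
set a := ip (x - y) (x - y) in IH1 *.
set b := ip (y - Ti j y) (y - Ti j y) in hy *.
have a0' : 0 <= a by apply: ip_ge0.
have b0 : 0 <= b by apply: ip_ge0.
have hA1 : A * (X - Y) <= A * (X - Z) by apply: ler_wpM2l => //; lra.
have hK1 : K * (Y - Z) <= K * (X - Z) by apply: ler_wpM2l; lra.
have hA2 : 0 <= A * (X - Y) by apply: mulr_ge0 => //; lra.
split.
  have -> : x - Ti j y = (x - y) + (y - Ti j y) by rewrite addrA subrK.
  have := ip_par (x - y) (y - Ti j y); rewrite -/a -/b.
  lra.
move=> i; rewrite in_cons => /orP [/eqP -> | ins].
  have -> : x - Ti j x = ((x - y) + (y - Ti j y)) + (Ti j y - Ti j x).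
    by rewrite !addrA !subrK.
  have h1 := ip_par ((x - y) + (y - Ti j y)) (Ti j y - Ti j x).
  have h2 := ip_par (x - y) (y - Ti j y); rewrite -/a -/b in h2.
  have h3 : ip (Ti j y - Ti j x) (Ti j y - Ti j x) <= a.
    by rewrite /a -nle_ip distrC; apply: Ti_nonexp.
  lra.
have := IH2 i ins; lra.
Qed.

Lemma Psi_fix p : Psi p <-> forall i, Ti i p = p.
Proof. by split=> h i; [apply/Ti_fix; apply: h | apply/Ti_fix; apply: h]. Qed.

Lemma Psi_convex : convex_set_ Psi.
Proof.
move=> p q t hp hq t0 t1; apply/Psi_fix => i.
set m := t *: p + (1 - t) *: q; set w := Ti i m.
have h1 : ip (w - p) (w - p) <= ip (m - p) (m - p).
  by rewrite -nle_ip -{1}((Psi_fix p).1 hp i); apply: Ti_nonexp.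
have h2 : ip (w - q) (w - q) <= ip (m - q) (m - q).
  by rewrite -nle_ip -{1}((Psi_fix q).1 hq i); apply: Ti_nonexp.
have e : t * ip (w - p) (w - p) + (1 - t) * ip (w - q) (w - q) =
  ip (w - m) (w - m) + t * ip (m - p) (m - p) + (1 - t) * ip (m - q) (m - q).
  rewrite /m !ipE ?(ipC p w, ipC q w, ipC q p); ring.
have h1' := ler_wpM2l t0 h1.
have h2' := ler_wpM2l (_ : 0 <= 1 - t) h2.
have : ip (w - m) (w - m) <= 0.
  have : 0 <= 1 - t by lra.
  move=> /h2'; lra.
move=> hw; apply: vec_eq; apply/le_anti; rewrite hw ip_ge0.
done.
Qed.

Lemma Psi_seqclosed : seqclosed Psi.
Proof.
move=> u l hu /cvg_seqP ul; apply/Psi_fix => i.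
apply/eqP; rewrite -subr_eq0 -normr_eq0; apply/eqP/le_anti.
rewrite normr_ge0 andbT; apply/ler_addgt0Pr => e e0; rewrite add0r.
have [n hn] := ul (e / 2) ltac:(lra).
have hn' := hn n (leqnn n).
have Tu : Ti i (u n) = u n by apply: (Psi_fix _).1.
have -> : Ti i l - l = (Ti i l - Ti i (u n)) + (u n - l) by rewrite Tu addrA subrK.
apply: le_trans (ler_normD _ _) _.
have := Ti_nonexp i l (u n); rewrite (distrC (u n)); lra.
Qed.

Variables (x0 : V) (p0 : V).
Hypothesis Pp0 : Psi p0.
Let Fc := F (enum 'I_N).
Let xk k := iter k Fc x0.

Lemma fejer p : Psi p -> forall k, `|xk k.+1 - p| <= `|xk k - p|.
Proof.
move=> hp k; rewrite /xk iterS -{1}(F_fix (enum 'I_N) hp); apply: F_nonexp.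
Qed.

Lemma fejer_le p : Psi p -> forall k m, (k <= m)%N -> `|xk m - p| <= `|xk k - p|.
Proof.
move=> hp k m /subnK <-; elim: (m - k)%N => [|n IH] //=.
by rewrite ?addSn; apply: le_trans IH; apply: fejer.
Qed.

Lemma xk_bound : exists B, forall k, `|xk k| <= B.
Proof.
exists (`|x0 - p0| + `|p0|) => k.
have := fejer_le Pp0 (leq0n k); rewrite /xk /= => h.
have -> : iter k Fc x0 = (iter k Fc x0 - p0) + p0 by rewrite subrK.
apply: le_trans (ler_normD _ _) _; lra.
Qed.

Lemma dec_cauchy (d : nat -> R) : (forall k, 0 <= d k) -> (forall k, d k.+1 <= d k) ->
  forall e, 0 < e -> exists N, forall k m, (N <= k)%N -> (k <= m)%N -> d k - d m < e.
Proof.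
move=> d0 dS.
have dle : forall k m, (k <= m)%N -> d m <= d k.
  move=> k m /subnK <-; elim: (m - k)%N => [|n IH] //=.
  by rewrite ?addSn; apply: le_trans IH.
have hd : d n @[n --> \oo] --> inf (range d).
  apply: nonincreasing_cvgn; first by move=> n m; apply: dle.
  by exists 0 => _ [n _ <-].
move=> e e0; have /(cvg_seqP (V := R^o)) /(_ (e / 2)) := hd.
move=> /(_ ltac:(lra)) [M HN].
exists M => k m hk hkm.
have h1 := HN k hk; have h2 := HN m (leq_trans hk hkm).
move: h1 h2; rewrite /=.
set I := inf (range d) => h1 h2.
have a1 : d k - I <= `|I - d k| by rewrite distrC ler_norm.
have h1' : `|I - d k| < e / 2 := h1.
have h2' : `|I - d m| < e / 2 := h2.
have a2 : I - d m <= `|I - d m| by rewrite ler_norm.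
lra.
Qed.

Lemma asym_reg i : forall e, 0 < e -> exists N, forall k, (N <= k)%N ->
  `|xk k - Ti i (xk k)| < e.
Proof.
move=> e e0.
have [A [A0 hA]] := F_def (enum 'I_N).
set d := fun k => ip (xk k - p0) (xk k - p0).
have := @dec_cauchy d (fun k => ip_ge0 _) _.
move=> /(_ _ (e ^+ 2 / (A + 1))) [].
- by move=> k; rewrite /d -nle_ip; apply: fejer.
- by apply: divr_gt0; [apply: exprn_gt0 | lra].
move=> M HN; exists M => k hk.
rewrite nlt_sq ?ltW //.
have := (hA (xk k) p0 Pp0).2 i (mem_enum _ i).
have := HN k k.+1 hk (leqnSn k).
rewrite /d /xk iterS -/(xk k).
set D := _ - _.
rewrite ltr_pdivlMr; last lra.
move=> h1 h2; have : 0 <= D.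
  rewrite /D subr_ge0 -nle_ip -{1}(F_fix (enum 'I_N) Pp0); apply: F_nonexp.
move=> D0; have : 0 < e ^+ 2 by apply: exprn_gt0.
nra.
Qed.

Let Psi0 : Psi !=set0 := ex_intro _ p0 Pp0.
Let z k := metric_proj Psi (xk k).

Lemma z_near k : nearest Psi (xk k) (z k).
Proof. exact: proj_near Psi0 Psi_convex Psi_seqclosed. Qed.

Lemma z_cauchy k m : (k <= m)%N -> ip (z m - z k) (z m - z k) <=
  ip (xk k - z k) (xk k - z k) - ip (xk m - z m) (xk m - z m).
Proof.
move=> km.
have h1 := near_char Psi_convex (z_near m) (z_near k).1.
have := fejer_le (z_near k).1 km; rewrite nle_ip => h2.
move: h1 h2; set X := xk m; set a := z m; set b := z k.
rewrite !ipE ?(ipC a X, ipC b X, ipC b a); lra.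
Qed.

Lemma z_cvg : exists zs, Psi zs /\ z @ \oo --> zs.
Proof.
set e := fun k => ip (xk k - z k) (xk k - z k).
have hc : forall eps, 0 < eps -> exists M, forall m n, (M <= m)%N -> (M <= n)%N ->
    `|z m - z n| < eps.
  move=> eps eps0.
  have [|M HM] := @dec_cauchy e (fun k => ip_ge0 _) _ (eps ^+ 2) (exprn_gt0 _ eps0).
    move=> k; have := z_cauchy (leqnSn k); have := ip_ge0 (z k.+1 - z k).
    rewrite /e; lra.
  exists M => m n hm hn; rewrite nlt_sq ?ltW //.
  have [mn|nm] := leqP m n.
    have := z_cauchy mn; have := HM m n hm mn.
    have -> : z m - z n = - (z n - z m) by rewrite opprB.
    rewrite ipNl ipNr opprK; rewrite /e; lra.
  have := z_cauchy (ltnW nm); have := HM n m hn (ltnW nm).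
  rewrite /e; lra.
have [zs hzs] := cauchy_seq hc.
exists zs; split=> //.
apply: (Psi_seqclosed (u := z)) hzs => k; exact: (z_near k).1.
Qed.


Lemma UI (U : set_system nat) {UU : ProperFilter U}
  (hN : forall M, U [set k | (M <= k)%N]) (S1 S2 : set nat) :
  U S1 -> (exists M, forall k, (M <= k)%N -> S2 k) -> exists k, S1 k /\ S2 k.
Proof.
move=> h1 [M hM]; have h := @filterI nat U (@filter_filter _ _ UU) S1 _ h1 (hN M).
have [k [/= k1 k2]] := filter_ex h.
by exists k; split=> //; exact: hM.
Qed.

Lemma weak_U (U : set_system nat) {UU : UltraFilter U}
  (hN : forall M, U [set k | (M <= k)%N]) zs :
  Psi zs -> z @ \oo --> zs -> forall y, ulim U (fun k => ip (xk k) y) (ip zs y).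
Proof.
move=> Pzs /cvg_seqP zcv.
have [B hB] := xk_bound.
have B0 : 0 <= B by apply: le_trans (hB 0).
have bnd : forall y k, `|ip (xk k) y| <= B * `|y|.
  move=> y k; apply: le_trans (CSabs _ _) _; apply: ler_wpM2r => //.
have : forall y, exists l, ulim U (fun k => ip (xk k) y) l.
  by move=> y; apply: ulim_ex (bnd y).
move=> /choice [L hL].
have LD : forall y1 y2, L (y1 + y2) = L y1 + L y2.
  move=> y1 y2; apply: (ulim_uniq (hL (y1 + y2))).
  apply: ulim_ext (ulimD (hL y1) (hL y2)) => k; by rewrite ipDr.
have LZ : forall r y, L (r *: y) = r * L y.
  move=> r y; apply: (ulim_uniq (hL (r *: y))).
  apply: ulim_ext (ulimZ r (hL y)) => k; by rewrite ipZr.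
have LB : forall y, `|L y| <= B * `|y| by move=> y; apply: ulim_bound (bnd y) (hL y).
have [c hc] := riesz LD LZ LB.
have Pc : Psi c.
  apply/Psi_fix => i.
  set w := c - Ti i c; set s := ip w w.
  have s0 : 0 <= s by apply: ip_ge0.
  suff : s <= 0.
    move=> sle; apply/eqP; rewrite eq_sym -subr_eq0; apply/eqP; apply: ip_eq0.
    by apply/le_anti; rewrite sle s0.
  rewrite leNgt; apply/negP => spos.
  set K := B + `|c|.
  have K0 : 0 <= K by rewrite /K; have := normr_ge0 c; lra.
  have [M1 HM1] := asym_reg i (ltr01 : 0 < 1).
  have [|M2 HM2] := asym_reg i (_ : 0 < s / (4 * (2 * K + 1))).
    by apply: divr_gt0 => //; lra.
  have hev : exists M, forall k, (M <= k)%N -> `|xk k - Ti i (xk k)| < 1 /\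
      `|xk k - Ti i (xk k)| < s / (4 * (2 * K + 1)).
    exists (maxn M1 M2) => k hk; split; [apply: HM1 | apply: HM2];
      apply: leq_trans hk; [apply: leq_maxl | apply: leq_maxr].
  have [|k [k1 [k2 k3]]] := UI hN (hL w _ (_ : 0 < s / 4)) hev.
    lra.
  move: k1 k2 k3 => /=; rewrite hc.
  set r := `|xk k - Ti i (xk k)|.
  set n := `|xk k - c|.
  have n0 : 0 <= n by apply: normr_ge0.
  have r0 : 0 <= r by apply: normr_ge0.
  have nK : n <= K.
    rewrite /n /K; apply: le_trans (ler_normB _ _) _; have := hB k; lra.
  have tri : `|xk k - Ti i c| <= r + n.
    have -> : xk k - Ti i c = (xk k - Ti i (xk k)) + (Ti i (xk k) - Ti i c).
      by rewrite addrA subrK.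
    apply: le_trans (ler_normD _ _) _; have := Ti_nonexp i (xk k) c; rewrite /r /n; lra.
  have tri2 : ip (xk k - Ti i c) (xk k - Ti i c) <= (r + n) ^+ 2.
    by rewrite -nle_sq ?addr_ge0.
  have idt : ip (xk k - Ti i c) (xk k - Ti i c) =
      n ^+ 2 + s + 2 * (ip (xk k) w - ip c w).
    rewrite /n nE /s /w !ipE ?(ipC c (xk k), ipC (Ti i c) (xk k), ipC (Ti i c) c); ring.
  rewrite idt in tri2.
  move=> h1 h2 h3.
  have h1' : - (s / 4) < ip (xk k) w - ip c w.
    by have := ler_normN (ip (xk k) w - ip c w); lra.
  move: h3; rewrite ltr_pdivlMr; last lra.
  move=> h3; nra.
have czs : c = zs.
  apply: vec_eq; set t := ip (c - zs) (c - zs).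
  apply/le_anti; rewrite ip_ge0 andbT leNgt; apply/negP => tpos.
  set K2 := B + `|zs| + `|c - zs| + 1.
  have K20 : 0 < K2 by rewrite /K2; have := normr_ge0 zs; have := normr_ge0 (c - zs); lra.
  have [M1 HM1] := zcv 1 ltr01.
  have [M2 HM2] := zcv (t / (2 * K2)) (divr_gt0 tpos (mulr_gt0 (ltr0Sn _ 1) K20)).
  have hev : exists M, forall k, (M <= k)%N -> `|zs - z k| < 1 /\
      `|zs - z k| < t / (2 * K2).
    exists (maxn M1 M2) => k hk; split; [apply: HM1 | apply: HM2];
      apply: leq_trans hk; [apply: leq_maxl | apply: leq_maxr].
  have [|k [k1 [k2 k3]]] := UI hN (hL (c - zs) _ (_ : 0 < t / 2)) hev.
    lra.
  move: k1 k2 k3 => /=; rewrite hc => h1 h2 h3.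
  have ch := near_char Psi_convex (z_near k) Pc.
  set d := `|zs - z k| in h2 h3.
  have d0 : 0 <= d by apply: normr_ge0.
  have idt : ip (xk k - z k) (c - z k) = ip (xk k) (c - zs) - ip c (c - zs) + t
     + ip (xk k - zs) (zs - z k) + ip (zs - z k) (c - z k).
    rewrite /t !ipE ?(ipC c (xk k), ipC zs (xk k), ipC (z k) (xk k), ipC zs c,
      ipC (z k) c, ipC (z k) zs); ring.
  have e1 : `|ip (xk k - zs) (zs - z k)| <= (B + `|zs|) * d.
    apply: le_trans (CSabs _ _) _; apply: ler_wpM2r => //.
    apply: le_trans (ler_normB _ _) _; have := hB k; lra.
  have e2 : `|ip (zs - z k) (c - z k)| <= d * (`|c - zs| + 1).
    apply: le_trans (CSabs _ _) _; apply: ler_wpM2l => //.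
    have -> : c - z k = (c - zs) + (zs - z k) by rewrite addrA subrK.
    apply: le_trans (ler_normD _ _) _; rewrite -/d; lra.
  have f1 := ler_normN (ip (xk k - zs) (zs - z k)).
  have f2 := ler_normN (ip (zs - z k) (c - z k)).
  have f3 := ler_normN (ip (xk k) (c - zs) - ip c (c - zs)).
  move: h3; rewrite ltr_pdivlMr; last lra.
  move=> h3; rewrite idt in ch.
  have := normr_ge0 zs; have := normr_ge0 (c - zs).
  rewrite /K2 in h3 K20; nra.
by move=> y; rewrite -czs -hc; apply: hL.
Qed.

Lemma weak_cvg zs : Psi zs -> z @ \oo --> zs ->
  forall y, (fun k => ip (xk k) y : R^o) @ \oo --> (ip zs y : R^o).
Proof.
move=> Pzs zc y; apply/(cvg_seqP (V := R^o)) => e e0.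
apply: contrapT => hne.
have hinf : forall M, exists k, (M <= k)%N /\ ~ (`|ip zs y - ip (xk k) y| < e).
  move=> M; apply: contrapT => hM; apply: hne; exists M => k Mk.
  by apply: contrapT => hk; apply: hM; exists k; split.
set B := fun M => [set k | (M <= k)%N /\ ~ (`|ip zs y - ip (xk k) y| < e)].
have FF : Filter (filter_from setT B).
  apply: filter_from_filter; first by exists 0%N.
  move=> i j _ _; exists (maxn i j) => // k [hk hk2]; split; split => //;
    apply: leq_trans hk; [apply: leq_maxl | apply: leq_maxr].
have PF : ProperFilter (filter_from setT B).
  apply: filter_from_proper => i _; have [k hk] := hinf i; by exists k.
have [U [UU sub]] := ultraFilterLemma PF.
have hN : forall M, U [set k | (M <= k)%N].
  by move=> M; apply: sub; exists M => // k [].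
have hBU : U [set k | ~ (`|ip zs y - ip (xk k) y| < e)].
  by apply: sub; exists 0%N => // k [].
have hl := @weak_U U UU hN zs Pzs zc y e e0.
have := @filterI nat U (@filter_filter _ _ (@ultra_proper _ _ UU)) _ _ hl hBU.
move=> /(@filter_ex _ U (@ultra_proper _ _ UU)) [k [/= k1 k2]].
by apply: k2; rewrite distrC.
Qed.

End Comp.
End Hilbert.

Theorem theorem4p2 (R : realType) (V : completeNormedModType R)
  (ip : V -> V -> R) (N : nat) (f : 'I_N -> V -> V) (alpha : 'I_N -> R)
  (C : 'I_N -> set V) (lam : R) (x0 : V) :
  inner_product ip ->
  (0 < N)%N ->
  (forall i, 0 < alpha i) ->
  (forall i, inverse_strongly_monotone ip (alpha i) (f i)) ->
  (forall i, C i !=set0 /\ closed (C i) /\ convex_set_ (C i)) ->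
  [set x | forall i, C i x] !=set0 ->
  [set x | forall i, SOL ip (C i) (f i) x] !=set0 ->
  0 < lam -> (forall i, lam < 2 * alpha i) ->
  let Psi := [set x | forall i, SOL ip (C i) (f i) x] in
  let T := fun i x => metric_proj (C i) (x - lam *: f i x) in
  let Tcomp := fun x => foldr (fun i acc => T i acc) x (enum 'I_N) in
  let xk := fun k : nat => iter k Tcomp x0 in
  exists2 xs, Psi xs &
    (forall y, (fun k => ip (xk k) y : R^o) @ \oo --> (ip xs y : R^o)) /\
    (fun k => metric_proj Psi (xk k)) @ \oo --> xs.
Proof.
move=> hip _ a0 ism hC _ [p0 Pp0] l0 l2 Psi T Tcomp xk.
have [zs [Pzs zc]] := z_cvg hip a0 ism hC l0 l2 x0 Pp0.
exists zs => //; split => //.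
exact: (weak_cvg hip a0 ism hC l0 l2 Pp0 Pzs zc).
Qed.
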